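(* For every $n>3$, $\rho_T(P_n)=2$, where $P_n$ is the path on $n$ vertices.
   Context: Graphs are finite and simple. For $u,v\in(\mathbb{R}\cup\{\infty\})^k$ the min-plus tropical dot product is $u\odot v=\min_i(u_i+v_i)$. A min-plus $k$-tropical dot product representation of $G=(V,E)$ is a map $f:V\to(\mathbb{R}\cup\{\infty\})^k$ with a threshold $t>0$ such that for all distinct $x,y\in V$: $xy\in E$ iff $f(x)\odot f(y)\ge t$. $\rho_T(G)$ is the least $k\ge 1$ for which such a representation exists. *)

(* Defs.v *)
From Stdlib Require Import Reals Lra Lia.
Open Scope R_scope.

(* Elements of R ∪ {∞}: [Some r] is the real r, [None] is +∞. *)
Definition Rinf := option R.

Definition iadd (a b : Rinf) : Rinf :=
  match a, b with Some x, Some y => Some (x + y) | _, _ => None end.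

Definition imin (a b : Rinf) : Rinf :=
  match a, b with
  | None, _ => b
  | _, None => a
  | Some x, Some y => Some (Rmin x y)
  end.

(* A vector in (R ∪ {∞})^k is a function nat -> Rinf; only indices < k are used. *)
Fixpoint tdot (k : nat) (u v : nat -> Rinf) : Rinf :=
  match k with
  | O => None
  | S k' => imin (tdot k' u v) (iadd (u k') (v k'))
  end.

Definition ige (a : Rinf) (t : R) : Prop :=
  match a with None => True | Some x => t <= x end.

Definition trop_rep (n : nat) (adj : nat -> nat -> Prop) (k : nat) : Prop :=
  exists (f : nat -> nat -> Rinf) (t : R), 0 < t /\
    forall x y : nat, (x < n)%nat -> (y < n)%nat -> x <> y ->
      (adj x y <-> ige (tdot k (f x) (f y)) t).

Definition rhoT_eq (n : nat) (adj : nat -> nat -> Prop) (k : nat) : Prop :=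
  (1 <= k)%nat /\ trop_rep n adj k /\
  forall j : nat, (1 <= j)%nat -> trop_rep n adj j -> (k <= j)%nat.

Definition path_adj (x y : nat) : Prop := y = S x \/ x = S y.

(* Main.v *)
Require Import Defs.
From Stdlib Require Import Reals Lra Lia.
Open Scope R_scope.

Lemma no_rep1 : forall n, (3 < n)%nat -> ~ trop_rep n path_adj 1.
Proof.
  intros n Hn [f [t [Ht H]]].
  assert (H01 := H 0%nat 1%nat ltac:(lia) ltac:(lia) ltac:(lia)).
  assert (H12 := H 1%nat 2%nat ltac:(lia) ltac:(lia) ltac:(lia)).
  assert (H23 := H 2%nat 3%nat ltac:(lia) ltac:(lia) ltac:(lia)).
  assert (H02 := H 0%nat 2%nat ltac:(lia) ltac:(lia) ltac:(lia)).
  assert (H13 := H 1%nat 3%nat ltac:(lia) ltac:(lia) ltac:(lia)).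
  assert (H20 := H 2%nat 0%nat ltac:(lia) ltac:(lia) ltac:(lia)).
  assert (H31 := H 3%nat 1%nat ltac:(lia) ltac:(lia) ltac:(lia)).
  unfold path_adj in *; simpl in *.
  destruct (f 0%nat 0%nat) as [a0|]; destruct (f 1%nat 0%nat) as [a1|];
  destruct (f 2%nat 0%nat) as [a2|]; destruct (f 3%nat 0%nat) as [a3|];
  simpl in *;
  try (destruct H02 as [_ X]; specialize (X I); lia);
  try (destruct H13 as [_ X]; specialize (X I); lia);
  try (destruct H20 as [_ X]; specialize (X I); lia);
  try (destruct H31 as [_ X]; specialize (X I); lia).
  assert (t <= a0 + a1) by (apply H01; lia).
  assert (t <= a2 + a3) by (apply H23; lia).
  assert (~ t <= a0 + a2) by (intro X; apply H02 in X; lia).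
  assert (~ t <= a1 + a3) by (intro X; apply H13 in X; lia).
  lra.
Qed.

Definition fv (n x k : nat) : Rinf :=
  Some (if Nat.eqb k 0 then
          (if Nat.even x then INR x - 2 * INR n else 2 + 2 * INR n - INR x)
        else
          (if Nat.even x then 2 + 2 * INR n - INR x else INR x - 2 * INR n)).

Lemma even_S x : Nat.even (S x) = negb (Nat.even x).
Proof. rewrite Nat.even_succ, Nat.negb_even. reflexivity. Qed.

Lemma rmin_ge a b : 1 <= Rmin a b <-> 1 <= a /\ 1 <= b.
Proof.
  split.
  - intros h. split; eapply Rle_trans; eauto; [apply Rmin_l | apply Rmin_r].
  - intros [h1 h2]. apply Rmin_glb; auto.
Qed.

Lemma rep2 : forall n, trop_rep n path_adj 2.
Proof.
  intros n. exists (fv n), 1. split; [lra|].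
  intros x y Hx Hy Hxy. unfold fv; simpl. rewrite rmin_ge.
  apply lt_INR in Hx. apply lt_INR in Hy.
  unfold path_adj. pose proof (pos_INR n).
  destruct (Nat.even x) eqn:Ex; destruct (Nat.even y) eqn:Ey.
  - split.
    + intros [->| ->]; [rewrite even_S, Ex in Ey | rewrite even_S, Ey in Ex]; discriminate.
    + intros [h _]. lra.
  - split.
    + intros [->| ->]; rewrite ?S_INR; lra.
    + intros [h1 h2].
      assert (A : INR y <= INR (S x)) by (rewrite S_INR; lra).
      assert (B : INR x <= INR (S y)) by (rewrite S_INR; lra).
      apply INR_le in A. apply INR_le in B. lia.
  - split.
    + intros [->| ->]; rewrite ?S_INR; lra.
    + intros [h1 h2].
      assert (A : INR y <= INR (S x)) by (rewrite S_INR; lra).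
      assert (B : INR x <= INR (S y)) by (rewrite S_INR; lra).
      apply INR_le in A. apply INR_le in B. lia.
  - split.
    + intros [->| ->]; [rewrite even_S, Ex in Ey | rewrite even_S, Ey in Ex]; discriminate.
    + intros [_ h]. lra.
Qed.

Theorem mainTheorem17 : forall n : nat, (3 < n)%nat -> rhoT_eq n path_adj 2.
Proof.
  intros n Hn. split; [lia|]. split; [apply rep2|].
  intros j Hj Hr. destruct j as [|[|j]]; try lia.
  exfalso; exact (no_rep1 n Hn Hr).
Qed.
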